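(* Let $T=\begin{pmatrix}1&1\\0&1\end{pmatrix}\in\mathsf{SL}(2,\mathbb{Z})$. Then $$T^{12}=\begin{pmatrix}1&12\\0&1\end{pmatrix}=\left[\begin{pmatrix}1&1\\1&2\end{pmatrix},\begin{pmatrix}3&1\\-1&0\end{pmatrix}\right]^2,$$ so $T^{12}$ is a product of two commutators of elements of $\mathsf{SL}(2,\mathbb{Z})$; moreover there do not exist $X,Y\in\mathsf{SL}(2,\mathbb{Z})$ with $[X,Y]=T^{12}$. Hence the commutator length of $T^{12}$ in $\mathsf{SL}(2,\mathbb{Z})$ equals $2$.
   Context: $[X,Y]=XYX^{-1}Y^{-1}$. The commutator length of an element of $[\mathsf{SL}(2,\mathbb{Z}),\mathsf{SL}(2,\mathbb{Z})]$ is the least number of commutators of elements of $\mathsf{SL}(2,\mathbb{Z})$ whose product is that element. *)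

(* Defs.v *)
From HB Require Import structures.
From mathcomp Require Import all_boot all_order all_algebra.
Set Implicit Arguments. Unset Strict Implicit. Unset Printing Implicit Defensive.
Import Order.TTheory GRing.Theory Num.Theory.
Local Open Scope ring_scope.

Definition M2 := 'M[int]_2.

Definition mx2 (a b c d : int) : M2 :=
  \matrix_(i < 2, j < 2)
    if (i == 0 :> nat) then (if (j == 0 :> nat) then a else b)
    else (if (j == 0 :> nat) then c else d).

Definition inSL2 (X : M2) : Prop := \det X = 1.

Definition comm (X Y : M2) : M2 := X * Y * X^-1 * Y^-1.

Definition prod_of_comms (n : nat) (g : M2) : Prop :=
  exists (X Y : 'I_n -> M2),
    (forall i, inSL2 (X i) /\ inSL2 (Y i)) /\
    g = \prod_(i < n) comm (X i) (Y i).

Definition comm_length_eq (g : M2) (n : nat) : Prop :=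
  prod_of_comms n g /\ (forall m, prod_of_comms m g -> (n <= m)%N).

(* Main.v *)
Require Import Defs.
From mathcomp Require Import all_boot all_order all_algebra.
From Stdlib Require Import ZArith Lia.
From Stdlib Require List.
From mathcomp Require Import ssrZ.

Module ZC.
Local Open Scope Z_scope.
Inductive F16 := F0 | F1 | F2 | F3 | F4 | F5 | F6 | F7 | F8 | F9 | F10 | F11 | F12 | F13 | F14 | F15.
Definition mulF (x y : F16) : F16 := match x, y with
 | F0, F0 => F0
 | F0, F1 => F0
 | F0, F2 => F0
 | F0, F3 => F0
 | F0, F4 => F0
 | F0, F5 => F0
 | F0, F6 => F0
 | F0, F7 => F0
 | F0, F8 => F0
 | F0, F9 => F0
 | F0, F10 => F0
 | F0, F11 => F0
 | F0, F12 => F0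
 | F0, F13 => F0
 | F0, F14 => F0
 | F0, F15 => F0
 | F1, F0 => F0
 | F1, F1 => F1
 | F1, F2 => F2
 | F1, F3 => F3
 | F1, F4 => F4
 | F1, F5 => F5
 | F1, F6 => F6
 | F1, F7 => F7
 | F1, F8 => F8
 | F1, F9 => F9
 | F1, F10 => F10
 | F1, F11 => F11
 | F1, F12 => F12
 | F1, F13 => F13
 | F1, F14 => F14
 | F1, F15 => F15
 | F2, F0 => F0
 | F2, F1 => F2
 | F2, F2 => F4
 | F2, F3 => F6
 | F2, F4 => F8
 | F2, F5 => F10
 | F2, F6 => F12
 | F2, F7 => F14
 | F2, F8 => F0
 | F2, F9 => F2
 | F2, F10 => F4
 | F2, F11 => F6
 | F2, F12 => F8
 | F2, F13 => F10
 | F2, F14 => F12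
 | F2, F15 => F14
 | F3, F0 => F0
 | F3, F1 => F3
 | F3, F2 => F6
 | F3, F3 => F9
 | F3, F4 => F12
 | F3, F5 => F15
 | F3, F6 => F2
 | F3, F7 => F5
 | F3, F8 => F8
 | F3, F9 => F11
 | F3, F10 => F14
 | F3, F11 => F1
 | F3, F12 => F4
 | F3, F13 => F7
 | F3, F14 => F10
 | F3, F15 => F13
 | F4, F0 => F0
 | F4, F1 => F4
 | F4, F2 => F8
 | F4, F3 => F12
 | F4, F4 => F0
 | F4, F5 => F4
 | F4, F6 => F8
 | F4, F7 => F12
 | F4, F8 => F0
 | F4, F9 => F4
 | F4, F10 => F8
 | F4, F11 => F12
 | F4, F12 => F0
 | F4, F13 => F4
 | F4, F14 => F8
 | F4, F15 => F12
 | F5, F0 => F0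
 | F5, F1 => F5
 | F5, F2 => F10
 | F5, F3 => F15
 | F5, F4 => F4
 | F5, F5 => F9
 | F5, F6 => F14
 | F5, F7 => F3
 | F5, F8 => F8
 | F5, F9 => F13
 | F5, F10 => F2
 | F5, F11 => F7
 | F5, F12 => F12
 | F5, F13 => F1
 | F5, F14 => F6
 | F5, F15 => F11
 | F6, F0 => F0
 | F6, F1 => F6
 | F6, F2 => F12
 | F6, F3 => F2
 | F6, F4 => F8
 | F6, F5 => F14
 | F6, F6 => F4
 | F6, F7 => F10
 | F6, F8 => F0
 | F6, F9 => F6
 | F6, F10 => F12
 | F6, F11 => F2
 | F6, F12 => F8
 | F6, F13 => F14
 | F6, F14 => F4
 | F6, F15 => F10
 | F7, F0 => F0
 | F7, F1 => F7
 | F7, F2 => F14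
 | F7, F3 => F5
 | F7, F4 => F12
 | F7, F5 => F3
 | F7, F6 => F10
 | F7, F7 => F1
 | F7, F8 => F8
 | F7, F9 => F15
 | F7, F10 => F6
 | F7, F11 => F13
 | F7, F12 => F4
 | F7, F13 => F11
 | F7, F14 => F2
 | F7, F15 => F9
 | F8, F0 => F0
 | F8, F1 => F8
 | F8, F2 => F0
 | F8, F3 => F8
 | F8, F4 => F0
 | F8, F5 => F8
 | F8, F6 => F0
 | F8, F7 => F8
 | F8, F8 => F0
 | F8, F9 => F8
 | F8, F10 => F0
 | F8, F11 => F8
 | F8, F12 => F0
 | F8, F13 => F8
 | F8, F14 => F0
 | F8, F15 => F8
 | F9, F0 => F0
 | F9, F1 => F9
 | F9, F2 => F2
 | F9, F3 => F11
 | F9, F4 => F4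
 | F9, F5 => F13
 | F9, F6 => F6
 | F9, F7 => F15
 | F9, F8 => F8
 | F9, F9 => F1
 | F9, F10 => F10
 | F9, F11 => F3
 | F9, F12 => F12
 | F9, F13 => F5
 | F9, F14 => F14
 | F9, F15 => F7
 | F10, F0 => F0
 | F10, F1 => F10
 | F10, F2 => F4
 | F10, F3 => F14
 | F10, F4 => F8
 | F10, F5 => F2
 | F10, F6 => F12
 | F10, F7 => F6
 | F10, F8 => F0
 | F10, F9 => F10
 | F10, F10 => F4
 | F10, F11 => F14
 | F10, F12 => F8
 | F10, F13 => F2
 | F10, F14 => F12
 | F10, F15 => F6
 | F11, F0 => F0
 | F11, F1 => F11
 | F11, F2 => F6
 | F11, F3 => F1
 | F11, F4 => F12
 | F11, F5 => F7
 | F11, F6 => F2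
 | F11, F7 => F13
 | F11, F8 => F8
 | F11, F9 => F3
 | F11, F10 => F14
 | F11, F11 => F9
 | F11, F12 => F4
 | F11, F13 => F15
 | F11, F14 => F10
 | F11, F15 => F5
 | F12, F0 => F0
 | F12, F1 => F12
 | F12, F2 => F8
 | F12, F3 => F4
 | F12, F4 => F0
 | F12, F5 => F12
 | F12, F6 => F8
 | F12, F7 => F4
 | F12, F8 => F0
 | F12, F9 => F12
 | F12, F10 => F8
 | F12, F11 => F4
 | F12, F12 => F0
 | F12, F13 => F12
 | F12, F14 => F8
 | F12, F15 => F4
 | F13, F0 => F0
 | F13, F1 => F13
 | F13, F2 => F10
 | F13, F3 => F7
 | F13, F4 => F4
 | F13, F5 => F1
 | F13, F6 => F14
 | F13, F7 => F11
 | F13, F8 => F8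
 | F13, F9 => F5
 | F13, F10 => F2
 | F13, F11 => F15
 | F13, F12 => F12
 | F13, F13 => F9
 | F13, F14 => F6
 | F13, F15 => F3
 | F14, F0 => F0
 | F14, F1 => F14
 | F14, F2 => F12
 | F14, F3 => F10
 | F14, F4 => F8
 | F14, F5 => F6
 | F14, F6 => F4
 | F14, F7 => F2
 | F14, F8 => F0
 | F14, F9 => F14
 | F14, F10 => F12
 | F14, F11 => F10
 | F14, F12 => F8
 | F14, F13 => F6
 | F14, F14 => F4
 | F14, F15 => F2
 | F15, F0 => F0
 | F15, F1 => F15
 | F15, F2 => F14
 | F15, F3 => F13
 | F15, F4 => F12
 | F15, F5 => F11
 | F15, F6 => F10
 | F15, F7 => F9
 | F15, F8 => F8
 | F15, F9 => F7
 | F15, F10 => F6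
 | F15, F11 => F5
 | F15, F12 => F4
 | F15, F13 => F3
 | F15, F14 => F2
 | F15, F15 => F1
 end.
Definition eqF (x y : F16) : bool := match x, y with
 | F0, F0 => true
 | F1, F1 => true
 | F2, F2 => true
 | F3, F3 => true
 | F4, F4 => true
 | F5, F5 => true
 | F6, F6 => true
 | F7, F7 => true
 | F8, F8 => true
 | F9, F9 => true
 | F10, F10 => true
 | F11, F11 => true
 | F12, F12 => true
 | F13, F13 => true
 | F14, F14 => true
 | F15, F15 => true
 | _, _ => false end.
Definition Ftab : list F16 := [:: F0; F1; F2; F3; F4; F5; F6; F7; F8; F9; F10; F11; F12; F13; F14; F15].

Lemma eqF_refl x : eqF x x = true. Proof. by case: x. Qed.

Definition tF (z : Z) : F16 := List.nth (Z.to_nat (z mod 16)) Ftab F0.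
Definition r16 : list Z := List.map Z.of_nat (List.seq 0 16).
Definition tup4 : list (Z*Z*Z*Z) := List.flat_map (fun a => List.flat_map (fun b => List.flat_map (fun c => List.map (fun d => (a,b,c,d)) r16) r16) r16) r16.
Definition SL16 := List.filter (fun x => match x with (a,b,c,d) => Z.eqb ((a*d - b*c) mod 16) 1 end) tup4.
Definition fx (x : Z*Z*Z*Z) := match x with (a,b,c,d) => (x, (tF a, tF b, tF c, tF d)) end.
Definition SLF := List.map fx SL16.
Definition z16 x := Z.eqb (x mod 16) 0.
Definition bad (x y : Z*Z*Z*Z * (F16*F16*F16*F16)) : bool :=
  match x, y with ((a,b,c,d),(_,b',c',_)), ((e,f,g,h),(_,f',g',_)) =>
  if eqF (mulF c' f') (mulF g' b') then
  if z16 (c*e+d*g - (g*a+h*c)) then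
  if z16 (a*e+b*g - (e*a+f*c + 12*(g*a+h*c))) then z16 (a*f+b*h - (e*b+f*d + 12*(g*b+h*d))) else false else false else false end.
Lemma check : (let L := SLF in List.forallb (fun x => List.forallb (fun y => negb (bad x y)) L) L) = true.
Proof. vm_compute. reflexivity. Qed.
Lemma check' : List.forallb (fun x => List.forallb (fun y => negb (bad x y)) SLF) SLF = true.
Proof. exact check. Qed.

Lemma mul_check : List.forallb (fun i => List.forallb (fun j => eqF (mulF (tF i) (tF j)) (tF (i*j))) r16) r16 = true.
Proof. vm_compute. reflexivity. Qed.

Lemma in_r16 z : 0 <= z < 16 -> List.In z r16.
Proof.
move=> Hz; apply/List.in_map_iff; exists (Z.to_nat z); split; first by lia.
apply/List.in_seq; lia.
Qed.

Lemma eqF_eq x y : eqF x y = true -> x = y.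
Proof. by case: x; case: y. Qed.

Lemma tF_mod z : tF (z mod 16) = tF z.
Proof. by rewrite /tF Z.mod_mod. Qed.

Lemma mulF_tF x y : mulF (tF x) (tF y) = tF (x*y).
Proof.
rewrite -(tF_mod x) -(tF_mod y) -(tF_mod (x*y)) Z.mul_mod //.
have Hx : 0 <= x mod 16 < 16 by apply: Z.mod_pos_bound.
have Hy : 0 <= y mod 16 < 16 by apply: Z.mod_pos_bound.
have := mul_check; rewrite List.forallb_forall => /(_ (x mod 16) (in_r16 _ Hx)).
rewrite List.forallb_forall => /(_ (y mod 16) (in_r16 _ Hy)) /eqF_eq ->.
by rewrite tF_mod.
Qed.

Definition cg x y := x mod 16 = y mod 16.
Lemma cg_add x x' y y' : cg x x' -> cg y y' -> cg (x+y) (x'+y').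
Proof. by rewrite /cg => H1 H2; rewrite Z.add_mod // H1 H2 -Z.add_mod. Qed.
Lemma cg_sub x x' y y' : cg x x' -> cg y y' -> cg (x-y) (x'-y').
Proof. by rewrite /cg => H1 H2; rewrite Zminus_mod H1 H2 -Zminus_mod. Qed.
Lemma cg_mul x x' y y' : cg x x' -> cg y y' -> cg (x*y) (x'*y').
Proof. by rewrite /cg => H1 H2; rewrite Z.mul_mod // H1 H2 -Z.mul_mod. Qed.
Lemma cg_mod x : cg (x mod 16) x.
Proof. by rewrite /cg Z.mod_mod. Qed.
Lemma cg_refl x : cg x x. Proof. by []. Qed.

Ltac cgt := repeat first [apply cg_mod | apply cg_sub | apply cg_add | apply cg_mul | apply cg_refl].

Lemma mem_tup4 a b c d : List.In a r16 -> List.In b r16 -> List.In c r16 -> List.In d r16 ->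
  List.In (a,b,c,d) tup4.
Proof.
move=> Ha Hb Hc Hd; rewrite /tup4.
apply/List.in_flat_map; exists a; split => //.
apply/List.in_flat_map; exists b; split => //.
apply/List.in_flat_map; exists c; split => //.
by apply/List.in_map_iff; exists d.
Qed.

Lemma mem_SLF a b c d : a*d - b*c = 1 ->
  List.In (fx (a mod 16, b mod 16, c mod 16, d mod 16)) SLF.
Proof.
move=> H; apply: List.in_map; apply/List.filter_In; split.
  by apply: mem_tup4; apply: in_r16; apply: Z.mod_pos_bound.
apply/Z.eqb_eq.
have -> : (a mod 16 * (d mod 16) - b mod 16 * (c mod 16)) mod 16 = (a*d-b*c) mod 16.
  have : cg (a mod 16 * (d mod 16) - b mod 16 * (c mod 16)) (a*d-b*c) by cgt.
  by [].
by rewrite H.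
Qed.

Lemma noSolZ a b c d e f g h :
  a*d - b*c = 1 -> e*h - f*g = 1 ->
  a*e+b*g = e*a+f*c + 12*(g*a+h*c) ->
  a*f+b*h = e*b+f*d + 12*(g*b+h*d) ->
  c*e+d*g = g*a+h*c ->
  c*f+d*h = g*b+h*d -> False.
Proof.
move=> HX HY E1 E2 E3 E4.
have := check'; rewrite List.forallb_forall => /(_ _ (mem_SLF _ _ _ _ HX)).
rewrite List.forallb_forall => /(_ _ (mem_SLF _ _ _ _ HY)).
rewrite /fx /bad !tF_mod !mulF_tF.
have -> : tF (c * f) = tF (g * b).
  rewrite -(tF_mod (c*f)) -(tF_mod (g*b)); congr tF.
  have : c*f = g*b by lia.
  by move=> ->.
rewrite eqF_refl.
have z0 : forall u v, u = v -> forall w, cg w (u - v) -> z16 w = true.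
  move=> u v -> w; rewrite /cg /z16 Z.sub_diag => ->; done.
rewrite (z0 _ _ E3); last by cgt.
rewrite (z0 _ _ E1); last by cgt.
by rewrite (z0 _ _ E2); last by cgt.
Qed.
End ZC.

Import GRing.Theory.
Local Open Scope ring_scope.

Lemma mx2E (X : M2) : X = mx2 (X 0 0) (X 0 1) (X 1 0) (X 1 1).
Proof.
apply/matrixP => i j; rewrite !mxE.
by case: i => [[|[|i]] Hi]; case: j => [[|[|j]] Hj] //=; congr (X _ _); apply/val_inj.
Qed.

Lemma mx2M a b c d e f g h :
  mx2 a b c d * mx2 e f g h = mx2 (a*e+b*g) (a*f+b*h) (c*e+d*g) (c*f+d*h).
Proof.
apply/matrixP => i j; rewrite -mulmxE !mxE !big_ord_recl big_ord0 !mxE.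
by case: i => [[|[|i]] Hi]; case: j => [[|[|j]] Hj] => //=; rewrite addr0.
Qed.

Lemma mx2_det a b c d : \det (mx2 a b c d) = a*d - b*c.
Proof.
rewrite (expand_det_row _ 0) !big_ord_recl big_ord0 /cofactor !det_mx11 !mxE /=.
by rewrite expr0 expr1 mul1r mulN1r addr0 mulrN.
Qed.

Lemma mx2_inj a b c d a' b' c' d' : mx2 a b c d = mx2 a' b' c' d' ->
  [/\ a = a', b = b', c = c' & d = d'].
Proof.
move=> H.
have := congr1 (fun M : M2 => M 0 0) H; have := congr1 (fun M : M2 => M 0 1) H.
have := congr1 (fun M : M2 => M 1 0) H; have := congr1 (fun M : M2 => M 1 1) H.
by rewrite !mxE /= => -> -> -> ->.
Qed.

Lemma mx2_1 : (1 : M2) = mx2 1 0 0 1.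
Proof. by apply/matrixP => i j; rewrite !mxE; case: i => [[|[|i]] Hi]; case: j => [[|[|j]] Hj]. Qed.

Lemma Tn n : (mx2 1 1 0 1)^+n = mx2 1 n%:R 0 1.
Proof.
elim: n => [|n IH]; first by rewrite expr0 mx2_1.
rewrite exprS IH mx2M; congr mx2; rewrite ?mulr1 ?mulr0 ?mul1r ?mul0r ?addr0 ?add0r //.
by rewrite -natr1 addrC.
Qed.

Lemma M2unit (X : M2) : \det X = 1 -> X \is a GRing.unit.
Proof. by move=> H; rewrite unitmxE H unitr1. Qed.

Lemma inv_mx2 a b c d : a*d - b*c = 1 -> (mx2 a b c d)^-1 = mx2 d (-b) (-c) a.
Proof.
move=> H.
have U : mx2 a b c d \is a GRing.unit by apply: M2unit; rewrite mx2_det.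
have HM : mx2 a b c d * mx2 d (-b) (-c) a = 1.
  rewrite mx2M mx2_1; congr mx2.
  - by rewrite mulrN -H.
  - by rewrite mulrN mulrC addNr.
  - by rewrite mulrN mulrC addrC addNr.
  - by rewrite mulrN addrC -H mulrC [c*b]mulrC.
by rewrite -[RHS](mulKr U) HM mulr1.
Qed.

Lemma not_comm (X Y : M2) : inSL2 X -> inSL2 Y -> comm X Y = (mx2 1 1 0 1)^+12 -> False.
Proof.
rewrite /inSL2 => HX HY H.
have XU := M2unit _ HX; have YU := M2unit _ HY.
have E : (mx2 1 1 0 1)^+12 * (Y * X) = X * Y.
  by rewrite -H /comm -!mulrA (mulKr YU) (mulVr XU) mulr1.
move: HX HY E; rewrite (mx2E X) (mx2E Y) !mx2_det Tn !mx2M.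
move: (X 0 0) (X 0 1) (X 1 0) (X 1 1) (Y 0 0) (Y 0 1) (Y 1 0) (Y 1 1) => a b c d e f g h HX HY.
case/mx2_inj; rewrite !mul1r !mul0r !add0r => E1 E2 E3 E4.
apply: (@ZC.noSolZ (Z_of_int a) (Z_of_int b) (Z_of_int c) (Z_of_int d)
  (Z_of_int e) (Z_of_int f) (Z_of_int g) (Z_of_int h)).
- by have := congr1 Z_of_int HX; rewrite rmorphB !rmorphM rmorph1.
- by have := congr1 Z_of_int HY; rewrite rmorphB !rmorphM rmorph1.
- by have := congr1 Z_of_int (esym E1); rewrite !(rmorphD, rmorphM, rmorph_nat) => E; exact E.
- by have := congr1 Z_of_int (esym E2); rewrite !(rmorphD, rmorphM, rmorph_nat) => E; exact E.
- by have := congr1 Z_of_int (esym E3); rewrite !(rmorphD, rmorphM, rmorph_nat) => E; exact E.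
- by have := congr1 Z_of_int (esym E4); rewrite !(rmorphD, rmorphM, rmorph_nat) => E; exact E.
Qed.

Lemma prod_comm_one (X Y : 'I_1 -> M2) : \prod_(i < 1) comm (X i) (Y i) = comm (X ord0) (Y ord0).
Proof. by rewrite big_ord1. Qed.

Theorem mainTheorem9 :
  let T := mx2 1 1 0 1 in
  let A := mx2 1 1 1 2 in
  let B := mx2 3 1 (-1) 0 in
  (inSL2 T /\ inSL2 A /\ inSL2 B) /\
  T ^+ 12 = mx2 1 12 0 1 /\
  T ^+ 12 = (comm A B) ^+ 2 /\
  ~ (exists X Y : M2, inSL2 X /\ inSL2 Y /\ comm X Y = T ^+ 12) /\
  comm_length_eq (T ^+ 12) 2.
Proof.
move=> T A B.
have HA : \det A = 1 by rewrite mx2_det.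
have HB : \det B = 1 by rewrite mx2_det.
have HT : \det T = 1 by rewrite mx2_det.
have T12 : T ^+ 12 = mx2 1 12 0 1 by rewrite Tn.
have CAB : T ^+ 12 = (comm A B) ^+ 2.
  have IA : A^-1 = mx2 2 (-1) (-1) 1 by apply: inv_mx2.
  have IB : B^-1 = mx2 0 (-1) 1 3 by apply: inv_mx2.
  rewrite /comm IA IB T12 expr2 !mx2M.
  by [].
have NC : ~ (exists X Y : M2, inSL2 X /\ inSL2 Y /\ comm X Y = T ^+ 12).
  by case=> X [Y [HX [HY H]]]; exact: (not_comm _ _ HX HY H).
split; first by [].
split; first by [].
split; first by [].
split; first by [].
split.
  exists (fun _ => A), (fun _ => B); split; first by move=> i; split.
  by rewrite prodr_const card_ord.
case=> [|[|m]] // [X [Y [HXY H]]].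
  move: H; rewrite big_ord0 T12 mx2_1 => /mx2_inj [_ H _ _]; discriminate H.
move: H; rewrite big_ord1 => H; exfalso; apply: NC.
by exists (X ord0), (Y ord0); have [? ?] := HXY ord0; split; [|split].
Qed.
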